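(* Let $G$ be a graph of order $n(G)$. Then $\mathrm{sg_e}(G) = n(G)$ if and only if every vertex $u$ of $G$ has a dominant neighbor, i.e. a neighbor $v$ with $N[u] \subseteq N[v]$.
   Context: All graphs are finite, simple and connected. $N[u] = \{u\} \cup \{x : ux \in E(G)\}$ is the closed neighborhood of $u$. A set $S \subseteq V(G)$ is a strong edge geodetic set of $G$ if one can assign to every unordered pair $\{u,v\}$ of distinct vertices of $S$ either one shortest $u,v$-path $P_{uv}$ in $G$ or no path, in such a way that every edge of $G$ lies on at least one of the assigned paths. The strong edge geodetic number $\mathrm{sg_e}(G)$ is the minimum cardinality of a strong edge geodetic set of $G$. *)

(* Defs.v *)
From mathcomp Require Import all_boot.
Set Implicit Arguments. Unset Strict Implicit. Unset Printing Implicit Defensive.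

Definition simple_graph (T : finType) (e : rel T) : Prop :=
  symmetric e /\ irreflexive e.

Definition connected_graph (T : finType) (e : rel T) : Prop :=
  forall x y : T, connect e x y.

Definition closed_nbhd (T : finType) (e : rel T) (u : T) : pred T :=
  fun x => (x == u) || e u x.

(* A walk is given by its start vertex x and the list p of the following
   vertices (so the vertex sequence is x :: p, ending at last x p). *)
Definition is_shortest_path (T : finType) (e : rel T) (x : T) (p : seq T) : Prop :=
  path e x p /\
  forall q : seq T, path e x q -> last x q = last x p -> size p <= size q.

Definition edge_on (T : finType) (a b : T) (x : T) (p : seq T) : bool :=
  has (fun uv : T * T => (uv == (a, b)) || (uv == (b, a))) (zip (x :: p) p).

(* S is a strong edge geodetic set: there is an assignment f giving every
   unordered pair P = {u,v} of distinct vertices of S either no path (None)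
   or one shortest u,v-path (Some (x, p), the vertex sequence x :: p whose
   endpoints are exactly the two elements of P), such that every edge of the
   graph lies on some assigned path. *)
Definition strong_edge_geodetic (T : finType) (e : rel T) (S : {set T}) : Prop :=
  exists f : {set T} -> option (T * seq T),
    (forall (P : {set T}) (x : T) (p : seq T), f P = Some (x, p) ->
        [/\ P \subset S, #|P| = 2, x \in P, last x p \in P
          & (last x p != x /\ is_shortest_path e x p)]) /\
    (forall a b : T, e a b ->
        exists (P : {set T}) (x : T) (p : seq T),
          f P = Some (x, p) /\ edge_on a b x p).

Definition sge_is (T : finType) (e : rel T) (k : nat) : Prop :=
  (exists S : {set T}, strong_edge_geodetic e S /\ #|S| = k) /\
  (forall S : {set T}, strong_edge_geodetic e S -> k <= #|S|).

Definition has_dominant_neighbor (T : finType) (e : rel T) (u : T) : Prop :=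
  exists v : T, e u v /\ {subset closed_nbhd e u <= closed_nbhd e v}.

(* Main.v *)
Require Import Defs.
From mathcomp Require Import all_boot.

Set Implicit Arguments. Unset Strict Implicit. Unset Printing Implicit Defensive.

Section Aux.
Variables (T : finType) (e : rel T).
Hypothesis (sym : symmetric e) (irr : irreflexive e).

Lemma has_zip_split (P : pred (T * T)) x p :
  has P (zip (x :: p) p) -> exists p1 z p2, p = p1 ++ z :: p2 /\ P (last x p1, z).
Proof.
elim: p x => [|y p IH] x //=.
case/orP => [H|H]; first by exists [::], y, p.
have [p1 [z [p2 [E H']]]] := IH y H.
by exists (y :: p1), z, p2; rewrite E.
Qed.

Lemma shortcut x p p1 w b p2 : is_shortest_path e x p -> p = p1 ++ w :: b :: p2 ->
  (last x p1 == b) || e (last x p1) b -> False.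
Proof.
move=> [Hp Hs] Ep.
move: Hp; rewrite Ep cat_path /= => /andP[H1 /and3P[_ _ H2]].
case/orP => [/eqP Eb | Eab].
- have := Hs (p1 ++ p2); rewrite Ep cat_path !last_cat !size_cat /= Eb H1 H2.
  move=> /(_ isT erefl); by rewrite leqNgt ltn_add2l ltnS leqnSn.
- have := Hs (p1 ++ b :: p2); rewrite Ep cat_path !last_cat !size_cat /= H1 H2 Eab.
  move=> /(_ isT erefl); by rewrite leqNgt ltn_add2l ltnS leqnn.
Qed.

Lemma set2_eq (a b c d : T) : [set a; b] = [set c; d] -> ((c, d) == (a, b)) || ((c, d) == (b, a)).
Proof.
move=> E.
have: c \in [set a; b] by rewrite E set21.
have: d \in [set a; b] by rewrite E set22.
have: a \in [set c; d] by rewrite -E set21.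
have: b \in [set c; d] by rewrite -E set22.
move=> /set2P[] Eb /set2P[] Ea /set2P[] Ed /set2P[] Ec; subst;
  by rewrite !xpair_eqE !eqxx ?orbT.
Qed.

Lemma sp1 x b : e x b -> is_shortest_path e x [:: b].
Proof.
move=> xb; split; first by rewrite /= xb.
move=> [|y q] //= _ Exb. by rewrite -Exb irr in xb.
Qed.

Lemma sp2 x u d : e u x -> e u d -> ~~ e x d -> x != d -> is_shortest_path e x [:: u; d].
Proof.
move=> ux ud xd nxd; split; first by rewrite /= sym ux ud.
move=> [|y [|z q]] //=.
- move=> _ E; by rewrite E eqxx in nxd.
- rewrite andbT => xy E; by rewrite -E xy in xd.
Qed.

Lemma edge_onC (a b x : T) p : edge_on a b x p = edge_on b a x p.
Proof. by rewrite /edge_on; apply: eq_has => uv; rewrite orbC. Qed.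

Definition fE (k : pred T) (P : {set T}) : option (T * seq T) :=
  if [pick ab : T * T | [&& e ab.1 ab.2, k ab.1, k ab.2 & P == [set ab.1; ab.2]]]
  is Some ab then Some (ab.1, [:: ab.2]) else None.

Lemma fE_some (k : pred T) P x p : fE k P = Some (x, p) ->
  exists b, [/\ p = [:: b], e x b, k x, k b & P = [set x; b]].
Proof.
rewrite /fE; case: pickP => [[a b] /and4P[H1 H2 H3 /eqP H4]|_] // [<- <-].
by exists b.
Qed.

Lemma fE_valid (k : pred T) (S : {set T}) : (forall y, k y -> y \in S) ->
  forall P x p, fE k P = Some (x, p) ->
  [/\ P \subset S, #|P| = 2, x \in P, last x p \in P
          & (last x p != x /\ is_shortest_path e x p)].
Proof.
move=> kS P x p /fE_some [b [-> xb kx kb ->]].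
have nxb : x != b by apply/eqP => E; rewrite E irr in xb.
split; rewrite ?set21 ?set22 //=.
- by apply/subsetP => y /set2P[]->; apply: kS.
- by rewrite cards2 nxb.
- by split; [rewrite eq_sym | exact: sp1].
Qed.

Lemma fE_cover (k : pred T) a b : e a b -> k a -> k b ->
  exists x p, fE k [set a; b] = Some (x, p) /\ edge_on a b x p.
Proof.
move=> ab ka kb; rewrite /fE; case: pickP => [[c d] /and4P[_ _ _ /eqP E]|H].
- exists c, [:: d]; split => //. rewrite /edge_on /= orbF. exact: set2_eq.
- by have := H (a, b); rewrite /= ab ka kb eqxx.
Qed.

Lemma dom_in (S : {set T}) : (forall u, has_dominant_neighbor e u) ->
  strong_edge_geodetic e S -> forall u, u \in S.
Proof.
move=> Hd [f [Hf Hcov]] u; case: (boolP (u \in S)) => // uS; exfalso.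
have [v [uv Hsub]] := Hd u.
have [P [x [p [fP Hon]]]] := Hcov u v uv.
have [PS _ xP lP [_ Hsp]] := Hf _ _ _ fP.
have xS := subsetP PS _ xP; have lS := subsetP PS _ lP.
have xu : x != u by apply/eqP => E; rewrite -E xS in uS.
have [p1 [z [p2 [Ep Hz]]]] := has_zip_split Hon.
case/orP: Hz; rewrite xpair_eqE => /andP[/eqP E1 /eqP E2].
- move: Ep E1; case/lastP: p1 => [|p1' a'] Ep E1.
    by move: E1 => /= E1; rewrite E1 eqxx in xu.
  rewrite last_rcons in E1; subst a' z.
  rewrite cat_rcons in Ep.
  apply: (shortcut Hsp Ep).
  have := Hsp.1; rewrite Ep cat_path /= => /and3P[_ Hau _].
  have := Hsub (last x p1'); rewrite /closed_nbhd !unfold_in sym Hau orbT.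
  by move=> /(_ isT); rewrite sym.
- subst z; move: Ep; case: p2 => [|b p2'] Ep.
    by rewrite Ep last_cat /= (negbTE uS) in lS.
  apply: (shortcut Hsp Ep).
  have := Hsp.1; rewrite Ep cat_path /= => /and3P[_ _ /andP[Hub _]].
  have := Hsub b; rewrite /closed_nbhd !unfold_in Hub orbT E1.
  by move=> /(_ isT); rewrite eq_sym.
Qed.

End Aux.


Section U.
Variables (T : finType) (e : rel T) (u : T).
Hypothesis (sym : symmetric e) (irr : irreflexive e).
Hypothesis Hx : forall w, e u w -> exists x, [&& e u x, x != w & ~~ e w x].

Definition fU (P : {set T}) : option (T * seq T) :=
  if fE e (predC1 u) P is Some r then Some r else
  if [pick ab : T * T | [&& e u ab.1, e u ab.2, ~~ e ab.1 ab.2, ab.1 != ab.2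
                          & P == [set ab.1; ab.2]]]
  is Some ab then Some (ab.1, [:: u; ab.2]) else None.

Lemma fU_valid P x p : fU P = Some (x, p) ->
  [/\ P \subset [set: T] :\ u, #|P| = 2, x \in P, last x p \in P
          & (last x p != x /\ is_shortest_path e x p)].
Proof.
rewrite /fU; case E: (fE e (predC1 u) P) => [r|].
  move=> Er; rewrite Er in E; apply: (fE_valid irr _ E) => y /= yu.
  by rewrite !inE yu.
case: pickP => [[c d] /and5P[uc ud ncd cd /eqP PE]|_] // [<- <-].
have cu : c != u by apply/eqP => Ec; rewrite Ec irr in uc.
have du : d != u by apply/eqP => Ec; rewrite Ec irr in ud.
rewrite PE /= set21 set22; split => //.
- by apply/subsetP => y /set2P[]->; rewrite !inE ?cu ?du.
- by rewrite cards2 cd.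
- split; first by rewrite eq_sym.
  exact: sp2.
Qed.

Lemma cov_u w : e u w -> exists P x p, fU P = Some (x, p) /\ edge_on u w x p.
Proof.
move=> uw; have [x /and3P[ux xw wx]] := Hx uw.
exists [set w; x]; rewrite /fU.
have -> : fE e (predC1 u) [set w; x] = None.
  case E: fE => [[c q]|] //.
  have [b [_ ecb _ _ PE]] := fE_some E.
  have := set2_eq PE; rewrite !xpair_eqE => /orP[] /andP[/eqP Ec /eqP Eb];
    subst; first by rewrite ecb in wx.
  by rewrite sym ecb in wx.
case: pickP => [[c d] /and5P[_ _ _ _ /eqP PE]|H].
- exists c, [:: u; d]; split => //.
  rewrite /edge_on /=.
  have := set2_eq PE; rewrite !xpair_eqE => /orP[] /andP[/eqP Ec /eqP Eb];
    subst; by rewrite ?xpair_eqE ?eqxx ?orbT.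
- by have := H (w, x); rewrite /= uw ux wx eq_sym xw eqxx.
Qed.

Lemma fU_seg : strong_edge_geodetic e ([set: T] :\ u).
Proof.
exists fU; split; first exact: fU_valid.
move=> a b ab; case: (boolP ((a != u) && (b != u))) => [/andP[au bu]|].
- have [x [p [E H]]] := fE_cover (k := predC1 u) ab au bu.
  by exists [set a; b], x, p; rewrite /fU E.
- rewrite negb_and !negbK => /orP[] /eqP Eu; rewrite Eu in ab *.
  + exact: cov_u.
  + have [P [x [p [E H]]]] := cov_u (etrans (sym u a) ab).
    by exists P, x, p; rewrite edge_onC.
Qed.

End U.

Theorem mainTheorem9 (T : finType) (e : rel T) :
  simple_graph e -> connected_graph e ->
  (sge_is e #|T| <-> forall u : T, has_dominant_neighbor e u).
Proof.
move=> [sym irr] _; split; last first.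
  move=> Hd; split.
  - exists [set: T]; split; last exact: cardsT.
    exists (fE e predT); split.
    + by apply: fE_valid => // y _; rewrite in_setT.
    + move=> a b ab; have [x [p [E H]]] := fE_cover (k := predT) ab erefl erefl.
      by exists [set a; b], x, p.
  - move=> S HS.
    have: [set: T] \subset S by apply/subsetP => u _; by rewrite (dom_in sym Hd HS).
    by move/subset_leq_card; rewrite cardsT.
move=> [_ Hmin] u.
case: (boolP [exists v, e u v && [forall y, closed_nbhd e u y ==> closed_nbhd e v y]])
  => [/existsP[v /andP[uv /forallP H]]|Hn].
  exists v; split => // y; move: (H y) => /implyP; exact.
exfalso.
have Hx : forall w, e u w -> exists x, [&& e u x, x != w & ~~ e w x].
  move=> w uw; move: Hn; rewrite negb_exists => /forallP /(_ w).
  rewrite uw /= negb_forall => /existsP [x]; rewrite negb_imply /closed_nbhd.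
  case/andP => /orP[/eqP->|ux] Hw.
    by rewrite sym uw orbT in Hw.
  by exists x; rewrite ux -negb_or Hw.
have := Hmin _ (fU_seg sym irr Hx).
by rewrite -cardsT (cardsD1 u [set: T]) in_setT add1n ltnn.
Qed.
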